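(* Let $\mathcal{X}'\subseteq\mathcal{X}$ be a set of pairwise backward kinematically inseparable observations. Then there exists $u\in\Delta(\mathcal{X})$ with $\mathrm{supp}(u)=\mathcal{X}$ such that for all $x',x''\in\mathcal{X}'$, $$\forall x\in\mathcal{X},a\in\mathcal{A}:\quad\frac{T(x'\mid x,a)}{u(x')}=\frac{T(x''\mid x,a)}{u(x'')}.$$ Conversely, if this identity holds for some $u\in\Delta(\mathcal{X})$ with full support and all $x',x''\in\mathcal{X}'\subseteq\mathcal{X}$, then $\mathcal{X}'$ is a backward kinematically inseparable set.
   Context: Block MDP: horizon $H$; finite latent states $\mathcal{S}=\sqcup_h\mathcal{S}_h$; countable observations $\mathcal{X}=\sqcup_h\mathcal{X}_h$; finite actions $\mathcal{A}$; transitions $T(\cdot\mid s,a)\in\Delta(\mathcal{S}_{h+1})$ for $s\in\mathcal{S}_h$; emissions $q(\cdot\mid s)\in\Delta(\mathcal{X}_h)$ with pairwise disjoint supports, giving a decoder $g^\star$. Observation transitions: $T(x'\mid x,a)=q(x'\mid g^\star(x'))T(g^\star(x')\mid g^\star(x),a)$. For $u\in\Delta(\mathcal{X}\times\mathcal{A})$ with full support, $\mathbb{P}_u(x,a\mid x')=\frac{T(x'\mid x,a)u(x,a)}{\sum_{\tilde x,\tilde a}T(x'\mid\tilde x,\tilde a)u(\tilde x,\tilde a)}$; $x_1',x_2'$ are backward kinematically inseparable if $\mathbb{P}_u(\cdot\mid x_1')=\mathbb{P}_u(\cdot\mid x_2')$ for every full-support $u$ (an equivalence relation); a backward KI set is a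 set of pairwise backward KI observations. *)

(* Defs.v *)
From HB Require Import structures.
From mathcomp Require Import all_boot all_order all_algebra.
From mathcomp Require Import all_classical all_reals all_analysis.
Set Implicit Arguments. Unset Strict Implicit. Unset Printing Implicit Defensive.
Import Order.TTheory GRing.Theory Num.Theory.
Local Open Scope classical_set_scope.
Local Open Scope ring_scope.

Section BlockMDP.
Variables (R : realType) (S : finType) (X : countType) (A : finType).

Definition is_distr (Y : countType) (u : Y -> R) : Prop :=
  (forall y, 0 <= u y) /\ (\esum_(y in [set: Y]) (u y)%:E = 1%E).

Definition full_support (Y : Type) (u : Y -> R) : Prop := forall y, 0 < u y.

(* Block MDP with horizon H; layers are numbered 1..H.
   T s a s' = T(s' | s, a), q s x = q(x | s), g = decoder g*. *)
Definition block_mdp (H : nat) (layerS : S -> nat) (layerX : X -> nat)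
    (T : S -> A -> S -> R) (q : S -> X -> R) (g : X -> S) : Prop :=
  (forall s, (1 <= layerS s <= H)%N) /\
      (forall x, (1 <= layerX x <= H)%N) /\
      (forall s a s', 0 <= T s a s') /\
      (forall s a, (layerS s < H)%N ->
          (forall s', 0 < T s a s' -> layerS s' = (layerS s).+1) /\
          \sum_(s' : S) T s a s' = 1) /\
      (forall s a s', layerS s = H -> T s a s' = 0) /\
      (forall s, is_distr (q s) /\
                 (forall x, 0 < q s x -> layerX x = layerS s)) /\
      (* pairwise disjoint supports, decoded by g *)
      (forall s x, 0 < q s x -> g x = s).

Definition obsT (T : S -> A -> S -> R) (q : S -> X -> R) (g : X -> S)
    (x : X) (a : A) (x' : X) : R :=
  q (g x') x' * T (g x) a (g x').

(* P_u(x, a | x') for u in Delta(X x A); the normalizer is finite (<= 1);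
   if it is 0 the value is 0 (MathComp convention r / 0 = 0). *)
Definition Pu (T : S -> A -> S -> R) (q : S -> X -> R) (g : X -> S)
    (u : X * A -> R) (x' : X) (x : X) (a : A) : R :=
  obsT T q g x a x' * u (x, a) /
  fine (\esum_(p in [set: X * A]) (obsT T q g p.1 p.2 x' * u p)%:E).

Definition backward_KI (T : S -> A -> S -> R) (q : S -> X -> R) (g : X -> S)
    (x1 x2 : X) : Prop :=
  forall u : X * A -> R, is_distr u -> full_support u ->
    forall x a, Pu T q g u x1 x a = Pu T q g u x2 x a.

Definition backward_KI_set (T : S -> A -> S -> R) (q : S -> X -> R)
    (g : X -> S) (X' : set X) : Prop :=
  forall x1 x2, X' x1 -> X' x2 -> backward_KI T q g x1 x2.

Definition ratio_identity (T : S -> A -> S -> R) (q : S -> X -> R)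
    (g : X -> S) (u : X -> R) (X' : set X) : Prop :=
  forall x' x'', X' x' -> X' x'' -> forall (x : X) (a : A),
    obsT T q g x a x' / u x' = obsT T q g x a x'' / u x''.

End BlockMDP.

(* Main.v *)
Require Import Defs.
From HB Require Import structures.
From mathcomp Require Import all_boot all_order all_algebra.
From mathcomp Require Import all_classical all_reals all_analysis.
From mathcomp Require Import ring lra.
Import Order.TTheory GRing.Theory Num.Theory.
Local Open Scope classical_set_scope.
Local Open Scope ring_scope.

Section Aux.
Variable R : realType.

Lemma esumZ (T : choiceType) (I : set T) (a : T -> \bar R) (r : R) :
  0 < r -> (forall i, (0 <= a i)%E) ->
  \esum_(i in I) (r%:E * a i)%E = (r%:E * \esum_(i in I) a i)%E.
Proof.
move=> r0 a0; rewrite /esum -ereal_sup_pZl // image_comp; congr ereal_sup.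
by apply: eq_imagel => B _ /=; rewrite ge0_mule_fsumr.
Qed.

Lemma geo_sum : (\sum_(k <oo) ((1 / (2 ^ (k + 1))%:R : R)%:E) = 1)%E.
Proof.
have := @cvg_geometric_eseries_half R 1 0.
rewrite expr0 divr1 => /cvg_lim <- //.
Qed.

Lemma pos_summable (Y : countType) :
  (\esum_(y in [set: Y]) ((1 / (2 ^ (pickle y + 1))%:R : R)%:E) <= 1)%E.
Proof.
set g := fun k : nat => ((1 / (2 ^ (k + 1))%:R : R)%:E).
have -> : \esum_(y in [set: Y]) ((1 / (2 ^ (pickle y + 1))%:R : R)%:E)
   = \esum_(j in pickle @` [set: Y]) g j.
  by rewrite esum_image //; move=> x y _ _; apply: pickle_inj.
rewrite -geo_sum nneseries_esumT; last by move=> n; rewrite lee_fin /g.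
rewrite esum_mkcond; apply: le_esum => n _; case: ifP => // _; by rewrite lee_fin.
Qed.

Lemma normalize (Y : countType) (y0 : Y) (f : Y -> R) :
  (forall y, 0 < f y) -> (\esum_(y in [set: Y]) (f y)%:E < +oo)%E ->
  exists k : R, 0 < k /\ is_distr (fun y => f y / k).
Proof.
move=> fp fin.
set E := \esum_(y in [set: Y]) (f y)%:E.
have E0 : ((f y0)%:E <= E)%E.
  apply: esum_ge; exists [set y0]; first by split => //; exact: finite_set1.
  by rewrite fsbig_set1.
have Eg : (0 <= E)%E by apply: esum_ge0 => y _; rewrite lee_fin ltW.
have Efin : E \is a fin_num by rewrite ge0_fin_numE.
exists (fine E); have kp : 0 < fine E.
  by rewrite -lte_fin fineK // (lt_le_trans _ E0) // lte_fin.
split => //; split; first by move=> y; rewrite divr_ge0 // ltW.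
rewrite (eq_esum (b := fun y => ((fine E)^-1%:E * (f y)%:E)%E)); last first.
  by move=> y _; rewrite -EFinM mulrC.
by rewrite esumZ ?invr_gt0 // => [|y]; [rewrite -[E in (_ * E)%E]fineK // -EFinM mulVf // gt_eqF | rewrite lee_fin ltW].
Qed.

Lemma fs_distr (Y : countType) (y0 : Y) :
  exists u : Y -> R, is_distr u /\ full_support u.
Proof.
have fp : forall y : Y, 0 < 1 / (2 ^ (pickle y + 1))%:R :> R.
  by move=> y; rewrite divr_gt0 // ltr0n expn_gt0.
have [k [kp [h1 h2]]] := @normalize Y y0 _ fp (le_lt_trans (pos_summable Y) (ltry _)).
exists (fun y => 1 / (2 ^ (pickle y + 1))%:R / k); split => //.
by move=> y; rewrite !divr_gt0 // ltr0n expn_gt0.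
Qed.

Lemma fineZ (r : R) (E : \bar R) : 0 < r -> fine (r%:E * E)%E = r * fine E.
Proof.
move=> r0; case: E => [x||] /=; first by [].
- by rewrite gt0_muley ?lte_fin // mulr0.
- by rewrite gt0_muleNy ?lte_fin // mulr0.
Qed.
End Aux.

Lemma mdp_facts (R : realType) (S : finType) (X : countType) (A : finType)
    (H : nat) (layerS : S -> nat) (layerX : X -> nat)
    (T : S -> A -> S -> R) (q : S -> X -> R) (g : X -> S) :
  block_mdp H layerS layerX T q g ->
  [/\ (forall s x, 0 <= q s x), (forall s x, q s x <= 1),
      (forall s a s', 0 <= T s a s'), (forall s a s', T s a s' <= 1)
    & (forall s, \esum_(x in [set: X]) (q s x)%:E = 1%E)].
Proof.
move=> [hS [hX [T0 [Tsum [TH [hq hg]]]]]].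
have q0 : forall s x, 0 <= q s x by move=> s x; have [[]] := hq s.
have qs : forall s, \esum_(x in [set: X]) (q s x)%:E = 1%E by move=> s; have [[]] := hq s.
split => //.
- move=> s x; rewrite -lee_fin -(qs s); apply: esum_ge.
  exists [set x]; first by split => //; exact: finite_set1.
  by rewrite fsbig_set1.
- move=> s a s'; have /andP[_ ] := hS s; rewrite leq_eqVlt => /orP[/eqP e|lt].
    by rewrite TH.
  have [_ <-] := Tsum s a lt.
  rewrite (bigD1 s') //= lerDl; exact: sumr_ge0.
Qed.

Lemma obsT_ge0 (R : realType) (S : finType) (X : countType) (A : finType)
    (T : S -> A -> S -> R) (q : S -> X -> R) (g : X -> S) :
  (forall s x, 0 <= q s x) -> (forall s a s', 0 <= T s a s') ->
  forall x a x', 0 <= obsT T q g x a x'.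
Proof. by move=> q0 T0 x a x'; rewrite /obsT mulr_ge0. Qed.

Lemma obsT_le1 (R : realType) (S : finType) (X : countType) (A : finType)
    (T : S -> A -> S -> R) (q : S -> X -> R) (g : X -> S) :
  (forall s x, 0 <= q s x) -> (forall s x, q s x <= 1) ->
  (forall s a s', 0 <= T s a s') -> (forall s a s', T s a s' <= 1) ->
  forall x a x', obsT T q g x a x' <= q (g x') x'.
Proof.
move=> q0 q1 T0 T1 x a x'; rewrite /obsT.
by rewrite -[leRHS]mulr1 ler_wpM2l.
Qed.

Lemma esum_obsT (R : realType) (S : finType) (X : countType) (A : finType)
    (T : S -> A -> S -> R) (q : S -> X -> R) (g : X -> S) (u : X * A -> R) :
  (forall s x, 0 <= q s x) -> (forall s x, q s x <= 1) ->
  (forall s a s', 0 <= T s a s') -> (forall s a s', T s a s' <= 1) ->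
  is_distr u -> forall x',
  (0 <= \esum_(p in [set: X * A]) (obsT T q g p.1 p.2 x' * u p)%:E)%E /\
  \esum_(p in [set: X * A]) (obsT T q g p.1 p.2 x' * u p)%:E \is a fin_num.
Proof.
move=> q0 q1 T0 T1 [u0 u1] x'.
have h0 : (0 <= \esum_(p in [set: X * A]) (obsT T q g p.1 p.2 x' * u p)%:E)%E.
  by apply: esum_ge0 => p _; rewrite lee_fin mulr_ge0 // obsT_ge0.
split => //; rewrite ge0_fin_numE //; apply: (@le_lt_trans _ _ 1%E); last exact: ltry.
rewrite -u1; apply: le_esum => p _; rewrite lee_fin -[leRHS]mul1r ler_wpM2r //.
by apply: le_trans (@obsT_le1 _ _ _ _ T q g q0 q1 T0 T1 p.1 p.2 x') (q1 _ _).
Qed.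

Lemma KI_prop (R : realType) (S : finType) (X : countType) (A : finType)
    (T : S -> A -> S -> R) (q : S -> X -> R) (g : X -> S) :
  (forall s x, 0 <= q s x) -> (forall s x, q s x <= 1) ->
  (forall s a s', 0 <= T s a s') -> (forall s a s', T s a s' <= 1) ->
  forall x' x0 xs as_, backward_KI T q g x' x0 -> 0 < obsT T q g xs as_ x0 ->
  exists c, 0 < c /\ forall x a, obsT T q g x a x' = c * obsT T q g x a x0.
Proof.
move=> q0 q1 T0 T1 x' x0 xs as_ KI v0p.
have [u [ud ufs]] := @fs_distr R _ (xs, as_).
have KIu := KI u ud ufs.
have [E0g E0f] := @esum_obsT _ _ _ _ T q g u q0 q1 T0 T1 ud x0.
have [E'g E'f] := @esum_obsT _ _ _ _ T q g u q0 q1 T0 T1 ud x'.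
set E0 := \esum_(p in _) _ in E0g E0f.
set E' := \esum_(p in _) _ in E'g E'f.
have Z0p : 0 < fine E0.
  rewrite -lte_fin fineK //; apply: (@lt_le_trans _ _ (obsT T q g xs as_ x0 * u (xs, as_))%:E).
    by rewrite lte_fin mulr_gt0.
  apply: esum_ge; exists [set (xs, as_)]; first by split => //; exact: finite_set1.
  by rewrite fsbig_set1.
have Z'g : 0 <= fine E' by rewrite fine_ge0.
have Z'p : 0 < fine E'.
  rewrite lt_neqAle Z'g andbT; apply/negP => /eqP Z0.
  have := KIu xs as_; rewrite /Pu -/E0 -/E' -Z0 invr0 mulr0 => /esym /eqP.
  by rewrite mulf_eq0 invr_eq0 !gt_eqF // mulr_gt0.
exists (fine E' / fine E0); split; first by rewrite divr_gt0.
move=> x a; have := KIu x a; rewrite /Pu -/E0 -/E' => h.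
have u0 : u (x, a) != 0 by rewrite gt_eqF.
have -> : obsT T q g x a x' = obsT T q g x a x' * u (x, a) / fine E' * fine E' / u (x, a).
  by field; rewrite u0 gt_eqF.
by rewrite h; field; rewrite u0 !gt_eqF.
Qed.

Lemma conv_dir (R : realType) (S : finType) (X : countType) (A : finType)
    (T : S -> A -> S -> R) (q : S -> X -> R) (g : X -> S) (X' : set X) :
  (forall s x, 0 <= q s x) -> (forall s a s', 0 <= T s a s') ->
  forall u : X -> R, full_support u -> ratio_identity T q g u X' ->
  backward_KI_set T q g X'.
Proof.
move=> q0 T0 u ufs rat x1 x2 h1 h2 u' u'd u'fs x a.
set c := u x1 / u x2.
have cp : 0 < c by rewrite divr_gt0.
have hv : forall x a, obsT T q g x a x1 = c * obsT T q g x a x2.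
  move=> y b; have e := rat x1 x2 h1 h2 y b.
  have n1 : u x1 != 0 by rewrite gt_eqF.
  have n2 : u x2 != 0 by rewrite gt_eqF.
  have -> : obsT T q g y b x1 = obsT T q g y b x1 / u x1 * u x1 by field.
  by rewrite e /c; field; rewrite ?n2 ?n1.
rewrite /Pu (eq_esum (b := fun p => (c%:E * (obsT T q g p.1 p.2 x2 * u' p)%:E)%E)); last first.
  by move=> p _; rewrite hv -EFinM [in RHS]mulrA.
rewrite esumZ //; last first.
  by move=> p; rewrite lee_fin mulr_ge0 ?obsT_ge0 //; case: u'd.
rewrite fineZ // hv.
set Z := fine _.
have [->|Zn] := eqVneq Z 0; first by rewrite mulr0 invr0 !mulr0.
by field; rewrite Zn gt_eqF.
Qed.

Theorem mainTheorem5 (R : realType) (S : finType) (X : countType) (A : finType)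
    (H : nat) (layerS : S -> nat) (layerX : X -> nat)
    (T : S -> A -> S -> R) (q : S -> X -> R) (g : X -> S)
    (hB : block_mdp H layerS layerX T q g) (hX : inhabited X)
    (X' : set X) :
  (backward_KI_set T q g X' ->
     exists u : X -> R, [/\ is_distr u, full_support u & ratio_identity T q g u X'])
  /\
  (forall u : X -> R, is_distr u -> full_support u -> ratio_identity T q g u X' ->
     backward_KI_set T q g X').
Proof.
have [q0 q1 T0 T1 qs] := @mdp_facts _ _ _ _ _ _ _ _ _ _ hB.
split; last first.
  by move=> u _ ufs rat; apply: (@conv_dir _ _ _ _ T q g X' q0 T0 u).
move=> KIs; case: hX => y0.
have [[x0 [xs [as_ [hx0 hp]]]]|none] :=
  pselect (exists x0 xs as_, X' x0 /\ 0 < obsT T q g xs as_ x0); last first.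
  have [u [ud ufs]] := @fs_distr R X y0.
  exists u; split => // x' x'' h' h'' x a.
  have z : forall z, X' z -> obsT T q g x a z = 0.
    move=> z hz; apply/eqP; rewrite eq_le obsT_ge0 // andbT leNgt; apply/negP => zp.
    by apply: none; exists z, x, a.
  by rewrite !z // !mul0r.
have [h [hd hfs]] := @fs_distr R X y0.
have cst : forall x', X' x' -> exists c, 0 < c /\
    forall x a, obsT T q g x a x' = c * obsT T q g x a x0.
  by move=> x' hx'; apply: (@KI_prop _ _ _ _ T q g q0 q1 T0 T1 x' x0 xs as_) => //; apply: KIs.
set w := fun x' => if `[< X' x' >] then obsT T q g xs as_ x' else h x'.
have wp : forall x', 0 < w x'.
  move=> x'; rewrite /w; case: (asboolP (X' x')) => hx' //.
  by have [c [cp ->]] := cst x' hx'; rewrite mulr_gt0.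
have wle : forall x', w x' <= \sum_(s : S) q s x' + h x'.
  move=> x'; have sg : 0 <= \sum_(s : S) q s x' by apply: sumr_ge0.
  rewrite /w; case: (asboolP (X' x')) => hx'; last by rewrite lerDr.
  apply: le_trans (@obsT_le1 _ _ _ _ T q g q0 q1 T0 T1 xs as_ x') _.
  apply: le_trans (_ : \sum_(s : S) q s x' <= _); last by rewrite lerDl ltW.
  by rewrite (bigD1 (g x')) //= lerDl sumr_ge0.
have wfin : (\esum_(x in [set: X]) (w x)%:E < +oo)%E.
  apply: (@le_lt_trans _ _ (\esum_(x in [set: X]) (\sum_(s : S) (q s x)%:E + (h x)%:E))%E).
    by apply: le_esum => x _; rewrite sumEFin -EFinD lee_fin.
  rewrite esumD; last 2 first.
  - by move=> x _; apply: sume_ge0 => s _; rewrite lee_fin.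
  - by move=> x _; rewrite lee_fin ltW.
  rewrite esum_sum; last by move=> x s _ _; rewrite lee_fin.
  have [_ ->] := hd.
  rewrite (eq_bigr (fun _ => 1%E)); last by move=> s _; exact: qs.
  by rewrite sumEFin -EFinD ltry.
have [k [kp kd]] := @normalize R X y0 w wp wfin.
exists (fun y => w y / k); split => //.
  by move=> y; rewrite divr_gt0.
move=> x' x'' h' h'' x a.
rewrite /w; case: (asboolP (X' x')) => // _; case: (asboolP (X' x'')) => // _.
have [c' [c'p e']] := cst x' h'.
have [c'' [c''p e'']] := cst x'' h''.
rewrite !e' !e''.
by field; rewrite !gt_eqF.
Qed.
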